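(* For each integer $d\geq 1$ there is a constant $b_d>1$ such that the following holds. Let $G$ be a graph without isolated vertices and of maximum degree at most $d$, and let $U\subseteq V(G)$. Then $|\varphi(G)\leftarrow U|\leq |\varphi(G)|/2^{|U|/b_d}$.
   Context: For a graph $G$ without isolated vertices, $\varphi(G)$ is the CNF whose variables are the vertices of $G$ and whose clauses are $(u\vee v)$ for all edges $\{u,v\}\in E(G)$. Boolean functions are identified with their sets of satisfying assignments (sets of literals, one per variable), and $|\cdot|$ denotes the number of satisfying assignments. For $U\subseteq V(G)$, $\varphi(G)\leftarrow U$ denotes the set of satisfying assignments of $\varphi(G)$ that assign every variable of $U$ the value true. *)

(* Defs.v *)
From mathcomp Require Import all_boot.
From Stdlib Require Import Reals.
Set Implicit Arguments. Unset Strict Implicit. Unset Printing Implicit Defensive.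

Definition simple_graph (T : finType) (e : rel T) : Prop :=
  symmetric e /\ irreflexive e.

Definition no_isolated (T : finType) (e : rel T) : Prop :=
  forall u : T, exists v : T, e u v.

Definition max_degree_le (T : finType) (e : rel T) (d : nat) : Prop :=
  forall u : T, #|[set v | e u v]| <= d.

(* An assignment (true/false to each vertex) satisfies phi(G) iff every
   edge clause (u \/ v) is satisfied. *)
Definition sat_phi (T : finType) (e : rel T) (f : {ffun T -> bool}) : bool :=
  [forall u, forall v, e u v ==> (f u || f v)].

Definition count_phi (T : finType) (e : rel T) : nat :=
  #|[set f : {ffun T -> bool} | sat_phi e f]|.

Definition count_phi_set (T : finType) (e : rel T) (U : {set T}) : nat :=
  #|[set f : {ffun T -> bool} | sat_phi e f && [forall u in U, f u]]|.

(* Main.v *)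
Require Import Defs.
From mathcomp Require Import all_boot.
From Stdlib Require Import Reals.
From mathcomp Require Import zify.
From Stdlib Require Import Lra.

Section Step.
Variables (T : finType) (e : rel T) (d : nat).
Hypothesis Hs : simple_graph e.
Hypothesis Hd : max_degree_le e d.

Definition setA (U : {set T}) :=
  [set f : {ffun T -> bool} | sat_phi e f && [forall u in U, f u]].

Lemma step (U : {set T}) (w : T) : w \in U ->
  (expn 2 d + 1) * #|setA U| <= expn 2 d * #|setA (U :\ w)|.
Proof.
move=> wU.
have [esy eirr] := Hs.
set N := [set v | e w v].
set B := [set g in setA (U :\ w) | ~~ g w].
pose F (f : {ffun T -> bool}) :=
  ([ffun x => if x == w then false else (x \in N) || f x],
   [ffun x : {x : T | x \in N} => f (val x)]).
have hB : #|setA U| <= #|B| * expn 2 d.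
  have -> : #|setA U| = #|F @: setA U|.
    apply/esym/card_in_imset => f1 f2.
    rewrite !inE => /andP[_ /forallP H1] /andP[_ /forallP H2] [E1 E2].
    apply/ffunP => x.
    case: (eqVneq x w) => [->|xw].
      by have := H1 w; have := H2 w; rewrite wU /= => -> ->.
    case xN: (x \in N).
      move/ffunP: E2 => /(_ (exist _ x xN)); rewrite !ffunE /=. done.
    move/ffunP: E1 => /(_ x); rewrite !ffunE (negbTE xw) xN /=. done.
  apply: (leq_trans (subset_leq_card (_ : _ \subset setX B [set: {ffun {x : T | x \in N} -> bool}]))).
    apply/subsetP => p /imsetP[f fA ->]; rewrite !inE /= andbT.
    move: fA; rewrite !inE => /andP[/forallP sf /forallP fU].
    rewrite ffunE eqxx andbT; apply/andP; split.
      apply/forallP => u; apply/forallP => v; apply/implyP => euv.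
      rewrite !ffunE.
      case: (eqVneq u w) => [uw|uw]; case: (eqVneq v w) => [vw|vw] /=.
      - by move: euv; rewrite uw vw eirr.
      - by rewrite inE -uw euv.
      - by rewrite inE -vw esy euv.
      - have := forallP (sf u) v; rewrite euv /= => /orP[->|->]; rewrite ?orbT //.
    apply/forallP => u; apply/implyP; rewrite !inE => /andP[uw uU].
    by rewrite ffunE (negbTE uw) (implyP (fU u) uU) orbT.
  rewrite cardsX cardsT card_ffun card_bool card_sig leq_mul2l.
  apply/orP; right. have -> : #|[pred x in N]| = #|N| by apply: eq_card. rewrite leq_exp2l //; exact: Hd.
have hC : #|setA U| + #|B| <= #|setA (U :\ w)|.
  rewrite -cardsUI.
  have -> : setA U :&: B = set0.
    apply/setP => f; rewrite !inE.
    case fw: (f w); rewrite ?andbF ?andbT //.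
    apply/negP => /andP[/andP[_ /forallP /(_ w)]]; rewrite wU fw //.
  rewrite cards0 addn0; apply: subset_leq_card; apply/subsetP => f.
  rewrite !inE => /orP[/andP[-> /forallP fU]|/andP[/andP[-> ->] _]] //.
  rewrite andTb; apply/forallP => u; rewrite !inE; apply/implyP => /andP[_ uU].
  exact: (implyP (fU u) uU).
nia.
Qed.
End Step.
Arguments setA {T} e U.
Arguments step {T e d} Hs Hd {U w}.

Lemma expn_pow m n : expn m n = Nat.pow m n.
Proof. elim: n => [|n IH] //. by rewrite expnS IH mulnE. Qed.

Lemma count_ind (T : finType) (e : rel T) (d : nat) :
  simple_graph e -> max_degree_le e d ->
  forall n (U : {set T}), #|U| = n ->
  expn (expn 2 d + 1) n * #|setA e U| <= expn (expn 2 d) n * count_phi e.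
Proof.
move=> Hs Hd; elim=> [|n IH] U cU.
  rewrite !expn0 !mul1n; apply: subset_leq_card; apply/subsetP => f.
  rewrite !inE => /andP[-> _] //.
have : 0 < #|U| by rewrite cU.
case/card_gt0P => w wU.
have cU' : #|U :\ w| = n.
  by move: cU; rewrite (cardsD1 w U) wU add1n => -[].
have := step Hs Hd wU; have := IH _ cU'.
rewrite !expnS => h1 h2.
set a := expn 2 d + 1 in h1 h2 *; set b := expn 2 d in h1 h2 *.
rewrite -mulnA mulnC -mulnA (mulnC #|_|).
apply: (leq_trans (leq_mul (leqnn _) h2)).
rewrite mulnCA -mulnA; exact: leq_mul (leqnn _) h1.
Qed.

Theorem theorem4 :
  forall d : nat, (1 <= d)%N ->
  exists b : R, (1 < b)%R /\
    forall (T : finType) (e : rel T),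
      simple_graph e -> no_isolated e -> max_degree_le e d ->
      forall U : {set T},
        (INR (count_phi_set e U) <=
         INR (count_phi e) / Rpower 2 (INR #|U| / b))%R.
Proof.
move=> d d1.
set D := INR (expn 2 d).
have HD : (2 <= D)%R.
  rewrite /D expn_pow pow_INR; replace (INR 2) with 2%R by (simpl; lra).
  have : (2 ^ 1 <= 2 ^ d)%R by apply: Rle_pow; [simpl; lra | apply/leP].
  simpl; lra.
set q := ((D + 1) / D)%R.
have q1 : (1 < q)%R.
  rewrite /q; apply: (Rmult_lt_reg_r D); [lra|]. field_simplify; lra.
have q2 : (q < 2)%R.
  rewrite /q; apply: (Rmult_lt_reg_r D); [lra|]. field_simplify; lra.
have lq : (0 < ln q)%R by rewrite -ln_1; apply: ln_increasing; lra.
have lq2 : (ln q < ln 2)%R by apply: ln_increasing; lra.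
exists (ln 2 / ln q)%R; split.
  apply: (Rmult_lt_reg_r (ln q)) => //. field_simplify; lra.
move=> T e Hs _ Hd U.
have key := @count_ind T e d Hs Hd _ U (erefl _).
have -> : Rpower 2 (INR #|U| / (ln 2 / ln q)) = (q ^ #|U|)%R.
  rewrite -Rpower_pow; last lra.
  rewrite /Rpower; congr exp; field; lra.
move/leP: key => /le_INR.
rewrite -!multE !mult_INR !expn_pow !pow_INR -!expn_pow -/D.
have -> : INR (expn 2 d + 1) = (D + 1)%R by rewrite addnE plus_INR.
rewrite /count_phi_set /setA => key.
have DE : D = (INR 2 ^ d)%R by rewrite /D expn_pow pow_INR.
rewrite -DE in key.
have Dn : (0 < D ^ #|U|)%R by apply: pow_lt; lra.
have qn : (0 < q ^ #|U|)%R by apply: pow_lt; lra.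
have -> : (q ^ #|U| = (D + 1) ^ #|U| / D ^ #|U|)%R by rewrite /q Rpow_mult_distr pow_inv.
have Xn : (0 < (D + 1) ^ #|U|)%R by apply: pow_lt; lra.
apply: (Rmult_le_reg_r ((D + 1) ^ #|U|)) => //.
set X := ((D + 1) ^ #|U|)%R in key Xn *.
set Y := (D ^ #|U|)%R in key Dn *.
replace (INR _ / (X / Y) * X)%R with (INR (count_phi e) * Y)%R by (field; lra).
rewrite (Rmult_comm (INR (count_phi e)) Y) (Rmult_comm (INR #|_|) X); exact: key.
Qed.
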